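(* Consider the heteroscedastic linear model $y(i,k)=\tau_i+\mu+\mathbf g^T(k)\beta+\varepsilon(i,k)$ with treatments $i\in\{1,\ldots,v_1\}$, covariate indices $k\in\{1,\ldots,d\}$, known regressors $\mathbf g(k)\in\mathbb R^{v_2}$, uncorrelated mean-zero errors with $\mathrm{Var}(\varepsilon(i,k))=\sigma^2/\lambda_i$, $\lambda_i>0$ known. Let $\Phi$ be an eigenvalue-based information function. If there exists a $\Phi$-optimal design for $\mathbf A^T\theta$ in this model, then there exists a product design $w\otimes\alpha$ (i.e. a design with $\xi(i,k)=w_i\alpha_k$ for some probability vectors $w\in\mathbb R^{v_1}$, $\alpha\in\mathbb R^d$) that is $\Phi$-optimal for $\mathbf A^T\theta$.
   Context: Write $\theta=(\tau^T,\mu,\beta^T)^T$, $\mathbf f(i,k)=(\mathbf e_i^T,1,\mathbf g^T(k))^T$. A design $\xi$ is a nonnegative function on $\{1,\ldots,v_1\}\times\{1,\ldots,d\}$ summing to one, with moment matrix $\mathbf M(\xi)=\sum_{i,k}\xi(i,k)\lambda_i\mathbf f(i,k)\mathbf f^T(i,k)$. Let $\mathbf Q_1\in\mathbb R^{v_1\times s_1}$ have full column rank, satisfy $\mathbf Q_1^T\mathbf 1_{v_1}=\mathbf 0$ and have no zero row; let $\mathbf K\in\mathbb R^{v_2\times s_2}$ have full column rank; $\mathbf Q_2=(\mathbf 0_{s_2},\mathbf K^T)^T$, $\mathbf A=\mathrm{diag}(\mathbf Q_1,\mathbf Q_2)$. A design is feasible for $\mathbf A^T\theta$ if $\mathcal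 C(\mathbf A)\subseteq\mathcal C(\mathbf M(\xi))$; its information matrix is then $\mathbf N_{\mathbf A}(\xi)=(\mathbf A^T\mathbf M^-(\xi)\mathbf A)^{-1}$. A design is $\Phi$-optimal for $\mathbf A^T\theta$ if it is feasible and maximizes $\Phi(\mathbf N_{\mathbf A}(\xi))$ over all feasible designs. An information function is a positively homogeneous, concave, nonnegative, nonconstant, upper semicontinuous function on nonnegative definite $s\times s$ matrices ($s=s_1+s_2$); it is eigenvalue-based if it depends only on the eigenvalues of its argument. *)

(* Defs.v *)
From HB Require Import structures.
From mathcomp Require Import all_boot all_order all_algebra.
From mathcomp Require Import reals.
Set Implicit Arguments. Unset Strict Implicit. Unset Printing Implicit Defensive.
Import Order.TTheory GRing.Theory Num.Theory.
Local Open Scope ring_scope.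

Section Defs.
Variable R : realType.

Definition nnd n (M : 'M[R]_n) : Prop :=
  M^T = M /\ forall x : 'cV[R]_n, 0 <= (x^T *m M *m x) 0 0.

Definition pos_homogeneous s (Phi : 'M[R]_s -> R) : Prop :=
  forall (c : R) M, 0 < c -> nnd M -> Phi (c *: M) = c * Phi M.
Definition concave_nnd s (Phi : 'M[R]_s -> R) : Prop :=
  forall (a : R) M N, 0 <= a <= 1 -> nnd M -> nnd N ->
    (1 - a) * Phi M + a * Phi N <= Phi ((1 - a) *: M + a *: N).
Definition nonneg_nnd s (Phi : 'M[R]_s -> R) : Prop :=
  forall M, nnd M -> 0 <= Phi M.
Definition nonconstant_nnd s (Phi : 'M[R]_s -> R) : Prop :=
  exists M N, nnd M /\ nnd N /\ Phi M <> Phi N.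
Definition usc_nnd s (Phi : 'M[R]_s -> R) : Prop :=
  forall M, nnd M -> forall e : R, 0 < e -> exists2 del : R, 0 < del &
    forall N, nnd N -> (forall i j, `|N i j - M i j| < del) -> Phi N < Phi M + e.
Definition information_function s (Phi : 'M[R]_s -> R) : Prop :=
  [/\ pos_homogeneous Phi, concave_nnd Phi, nonneg_nnd Phi,
      nonconstant_nnd Phi & usc_nnd Phi].
(* depends only on the eigenvalues (with multiplicities), i.e. on the
   characteristic polynomial *)
Definition eigenvalue_based s (Phi : 'M[R]_s -> R) : Prop :=
  forall M N, nnd M -> nnd N -> char_poly M = char_poly N -> Phi M = Phi N.

Definition prob_vec n (w : 'I_n -> R) : Prop :=
  (forall i, 0 <= w i) /\ \sum_(i < n) w i = 1.
Definition design v1 d (xi : 'I_v1 -> 'I_d -> R) : Prop :=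
  (forall i k, 0 <= xi i k) /\ \sum_(i < v1) \sum_(k < d) xi i k = 1.

Definition fvec v1 v2 d (g : 'I_d -> 'cV[R]_v2) (i : 'I_v1) (k : 'I_d)
  : 'cV[R]_(v1 + (1 + v2)) :=
  col_mx (delta_mx i 0) (col_mx 1 (g k)).

Definition moment v1 v2 d (lam : 'I_v1 -> R) (g : 'I_d -> 'cV[R]_v2)
  (xi : 'I_v1 -> 'I_d -> R) : 'M[R]_(v1 + (1 + v2)) :=
  \sum_(i < v1) \sum_(k < d)
     (xi i k * lam i) *: (fvec g i k *m (fvec g i k)^T).

Definition Amat v1 v2 s1 s2 (Q1 : 'M[R]_(v1, s1)) (K : 'M[R]_(v2, s2))
  : 'M[R]_(v1 + (1 + v2), s1 + s2) :=
  block_mx Q1 0 0 (col_mx (0 : 'M[R]_(1, s2)) K).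

(* feasibility: C(A) included in C(M(xi)) *)
Definition feasible m s (A : 'M[R]_(m, s)) (M : 'M[R]_m) : bool :=
  (A^T <= M^T)%MS.

(* information matrix (A^T M^- A)^{-1}; pinvmx M is a generalized inverse
   (M *m pinvmx M *m M = M) *)
Definition infmat m s (A : 'M[R]_(m, s)) (M : 'M[R]_m) : 'M[R]_s :=
  invmx (A^T *m pinvmx M *m A).

Definition Phi_optimal v1 v2 d s1 s2 (Phi : 'M[R]_(s1 + s2) -> R)
  (lam : 'I_v1 -> R) (g : 'I_d -> 'cV[R]_v2)
  (Q1 : 'M[R]_(v1, s1)) (K : 'M[R]_(v2, s2)) (xi : 'I_v1 -> 'I_d -> R) : Prop :=
  [/\ design xi, feasible (Amat Q1 K) (moment lam g xi) &
      forall eta, design eta -> feasible (Amat Q1 K) (moment lam g eta) ->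
        Phi (infmat (Amat Q1 K) (moment lam g eta))
          <= Phi (infmat (Amat Q1 K) (moment lam g xi))].

End Defs.

(* Main.v *)
Require Import Defs.
From HB Require Import structures.
From mathcomp Require Import all_boot all_order all_algebra.
From mathcomp Require Import reals.
From mathcomp Require Import ring lra.
Set Implicit Arguments. Unset Strict Implicit. Unset Printing Implicit Defensive.
Import Order.TTheory GRing.Theory Num.Theory.
Local Open Scope ring_scope.

Section Aux.
Variable R : realType.

Definition bf n (M : 'M[R]_n) (x y : 'cV[R]_n) : R := (x^T *m M *m y) 0 0.
Definition qf n (M : 'M[R]_n) (x : 'cV[R]_n) : R := bf M x x.



Lemma dotE n (x y : 'cV[R]_n) : (x^T *m y) 0 0 = \sum_j x j 0 * y j 0.
Proof. by rewrite mxE; apply: eq_bigr => j _; rewrite mxE. Qed.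

Lemma bf_sym n (M : 'M[R]_n) x y : M^T = M -> bf M x y = bf M y x.
Proof.
move=> sM; rewrite /bf.
have -> : (x^T *m M *m y) = (y^T *m M *m x)^T.
  by rewrite !trmx_mul trmxK sM mulmxA.
by rewrite mxE.
Qed.

Lemma bfDl n (M : 'M[R]_n) x y z : bf M (x + y) z = bf M x z + bf M y z.
Proof. by rewrite /bf linearD /= !mulmxDl mxE. Qed.
Lemma bfDr n (M : 'M[R]_n) x y z : bf M z (x + y) = bf M z x + bf M z y.
Proof. by rewrite /bf !mulmxDr mxE. Qed.
Lemma bfZl n (M : 'M[R]_n) a x z : bf M (a *: x) z = a * bf M x z.
Proof. by rewrite /bf linearZ /= -!scalemxAl mxE. Qed.
Lemma bfZr n (M : 'M[R]_n) a x z : bf M z (a *: x) = a * bf M z x.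
Proof. by rewrite /bf -!scalemxAr mxE. Qed.
Lemma bfNl n (M : 'M[R]_n) x z : bf M (- x) z = - bf M x z.
Proof. by rewrite -scaleN1r bfZl mulN1r. Qed.
Lemma bfNr n (M : 'M[R]_n) x z : bf M z (- x) = - bf M z x.
Proof. by rewrite -scaleN1r bfZr mulN1r. Qed.

Lemma qf_psd0 n (M : 'M[R]_n) z : M^T = M -> (forall x, 0 <= qf M x) ->
  qf M z = 0 -> M *m z = 0.
Proof.
move=> sM psd qz.
set y := M *m z.
have Sdef : bf M z y = \sum_j y j 0 ^+ 2.
  rewrite /bf.
  have -> : z^T *m M = y^T by rewrite /y trmx_mul sM.
  by rewrite dotE; apply: eq_bigr => j _; rewrite expr2.
set S := bf M z y in Sdef; set Q := qf M y.
have Q0 : 0 <= Q by apply: psd.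
have key t : 0 <= 2 * t * S + t ^+ 2 * Q.
  have := psd (z + t *: y).
  rewrite /qf bfDl !bfDr !bfZl !bfZr -/(qf M z) qz (bf_sym y z sM) -/S.
  rewrite -/(qf M y) -/Q.
  by have -> : 2 * t * S + t ^+ 2 * Q = 0 + t * S + (t * S + t * (t * Q)) by ring.
have S0 : S = 0.
  have := key (- S / (Q + 1)).
  have Q1 : 0 < Q + 1 by lra.
  move=> h.
  have h2 : 0 <= (2 * (- S / (Q + 1)) * S + (- S / (Q + 1)) ^+ 2 * Q) * (Q + 1) ^+ 2.
    by apply: mulr_ge0 => //; apply: sqr_ge0.
  have e : (2 * (- S / (Q + 1)) * S + (- S / (Q + 1)) ^+ 2 * Q) * (Q + 1) ^+ 2
    = - (S ^+ 2) * (Q + 2).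
    by field; rewrite lt0r_neq0.
  rewrite e in h2.
  have : S ^+ 2 * (Q + 2) <= 0 by lra.
  move=> h3; nra.
apply/matrixP => i j; rewrite (ord1 j) [RHS]mxE.
move: Sdef; rewrite S0 => /esym /eqP; rewrite psumr_eq0; last by move=> j' _; exact: sqr_ge0.
by move=> /allP H; have := H i (mem_index_enum _); rewrite /= sqrf_eq0 => /eqP.
Qed.

Section Charac.
Variables (m s : nat) (A : 'M[R]_(m, s)) (M : 'M[R]_m).
Hypotheses (sM : M^T = M) (psd : forall x, 0 <= qf M x)
  (Ainj : forall y : 'cV[R]_s, A *m y = 0 -> y = 0) (feas : feasible A M).

Let HH : {H : 'M[R]_(m, s) | A = M *m H}.
Proof.
have e := mulmxKpV feas.
exists ((A^T *m pinvmx M^T)^T).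
transitivity ((A^T *m pinvmx M^T *m M^T)^T); first by rewrite e trmxK.
by rewrite trmx_mul trmxK.
Qed.
Let H := sval HH.
Let AE : A = M *m H := svalP HH.
Let ATE : A^T = H^T *m M.
Proof. by rewrite AE trmx_mul sM. Qed.
Variable G : 'M[R]_m.
Hypothesis MGM : M *m G *m M = M.
Let MGtM : M *m G^T *m M = M.
Proof. by rewrite -{1}sM -{2}sM -!trmx_mul mulmxA MGM sM. Qed.
Let C := A^T *m G *m A.
Let CE : C = H^T *m M *m H.
Proof. by rewrite /C ATE AE -!mulmxA (mulmxA M G) (mulmxA (M *m G) M) MGM mulmxA. Qed.
Let MGA : M *m G *m A = A.
Proof. by rewrite AE mulmxA MGM. Qed.

Let Cunit : C \in unitmx.
Proof.
rewrite unitmxE unitfE; apply/negP => /det0P [v nv vC].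
have y0 : v^T = 0.
  apply: Ainj; rewrite AE -mulmxA; apply: qf_psd0 => //.
  have : (v *m C *m v^T) 0 0 = 0 by rewrite vC mul0mx mxE.
  by rewrite /qf /bf CE trmx_mul trmxK !mulmxA.
by move/negP: nv; apply; rewrite -[v]trmxK y0 trmx0.
Qed.

Let N := invmx C.
Lemma infmat_sym : N^T = N.
Proof.
by rewrite /N trmx_inv CE !trmx_mul trmxK sM mulmxA.
Qed.

Let NE : N = invmx C. Proof. by []. Qed.
Let CN : C *m N = 1%:M. Proof. by rewrite NE mulmxV. Qed.

Let u0 (x : 'cV[R]_s) := G *m A *m N *m x.

Let Au0 x : A^T *m u0 x = x.
Proof. by rewrite /u0 !mulmxA -/C CN mul1mx. Qed.

Let K1 : A^T *m G^T *m M *m G *m A = C.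
Proof.
have -> : A^T *m G^T *m M *m G *m A = A^T *m G^T *m (M *m G *m A) by rewrite !mulmxA.
rewrite MGA ATE AE.
have -> : H^T *m M *m G^T *m (M *m H) = H^T *m (M *m G^T *m M) *m H by rewrite !mulmxA.
by rewrite MGtM CE.
Qed.

Let qu0 x : qf M (u0 x) = qf N x.
Proof.
rewrite /qf /bf /u0.
have -> : (G *m A *m N *m x)^T *m M *m (G *m A *m N *m x)
   = x^T *m N *m (A^T *m G^T *m M *m G *m A) *m N *m x.
  by rewrite !trmx_mul infmat_sym !mulmxA.
by rewrite K1 -(mulmxA (x^T *m N) C N) CN mulmx1.
Qed.

Lemma infmat_attained x : exists u, A^T *m u = x /\ qf N x = qf M u.
Proof. by exists (u0 x); rewrite Au0 qu0. Qed.

Lemma infmat_le x u : A^T *m u = x -> qf N x <= qf M u.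
Proof.
move=> Aux.
have -> : u = u0 x + (u - u0 x) by rewrite addrC subrK.
have : A^T *m (u - u0 x) = 0 by rewrite mulmxBr Au0 Aux subrr.
move: (u - u0 x) => v Av.
have bv : bf M v (u0 x) = 0.
  rewrite /bf /u0 !mulmxA -(mulmxA _ M G) -(mulmxA _ (M *m G) A).
  rewrite MGA.
  have -> : v^T *m A = (A^T *m v)^T by rewrite trmx_mul trmxK.
  by rewrite Av trmx0 !mul0mx mxE.
rewrite /qf bfDl !bfDr bv (bf_sym _ _ sM) bv -/(qf M (u0 x)) qu0 -/(qf M v).
by rewrite addr0 add0r lerDl.
Qed.

Lemma infmat_nnd : nnd N.
Proof.
split; first exact: infmat_sym.
move=> x; have [u [_ e]] := infmat_attained x; move: e; rewrite /qf /bf => ->; exact: psd.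
Qed.

Lemma feas_ker (z : 'cV[R]_m) : M *m z = 0 -> A^T *m z = 0.
Proof. by move=> Mz; rewrite ATE -mulmxA Mz mulmx0. Qed.

End Charac.

Lemma bfMD n (M1 M2 : 'M[R]_n) x y : bf (M1 + M2) x y = bf M1 x y + bf M2 x y.
Proof. by rewrite /bf mulmxDr mulmxDl mxE. Qed.
Lemma bfMZ n (M1 : 'M[R]_n) c x y : bf (c *: M1) x y = c * bf M1 x y.
Proof. by rewrite /bf -scalemxAr -scalemxAl mxE. Qed.
Lemma bfMN n (M1 : 'M[R]_n) x y : bf (- M1) x y = - bf M1 x y.
Proof. by rewrite -scaleN1r bfMZ mulN1r. Qed.

Lemma nndP n (M1 : 'M[R]_n) : nnd M1 -> forall x, 0 <= qf M1 x.
Proof. by case. Qed.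

Lemma nndD n (M1 M2 : 'M[R]_n) : nnd M1 -> nnd M2 -> nnd (M1 + M2).
Proof.
move=> [s1 p1] [s2 p2]; split; first by rewrite linearD /= s1 s2.
by move=> x; have := bfMD M1 M2 x x; rewrite /bf => ->; apply: addr_ge0.
Qed.

Lemma nndZ n (M1 : 'M[R]_n) c : 0 <= c -> nnd M1 -> nnd (c *: M1).
Proof.
move=> c0 [s1 p1]; split; first by rewrite linearZ /= s1.
by move=> x; have := bfMZ M1 c x x; rewrite /bf => ->; apply: mulr_ge0.
Qed.

Lemma Phi_mono s (Phi : 'M[R]_s -> R) B C : information_function Phi ->
  nnd B -> nnd C -> Phi B <= Phi (B + C).
Proof.
move=> [hom conc nneg _ _] nB nC.
have h := conc (1/2) (2%:R *: B) (2%:R *: C).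
have e : (1 - 1/2) *: (2%:R *: B) + 1/2 *: (2%:R *: C) = B + C.
  have e1 : (1 - 1/2) * 2%:R = 1 :> R by field.
  have e2 : 1/2 * 2%:R = 1 :> R by field.
  by rewrite !scalerA e1 e2 !scale1r.
rewrite e in h.
have n2B : nnd (2%:R *: B) by apply: nndZ.
have n2C : nnd (2%:R *: C) by apply: nndZ.
have {}h := h _ n2B n2C.
have hB : Phi (2%:R *: B) = 2%:R * Phi B by apply: hom.
have hC := nneg _ n2C.
rewrite hB in h.
have hh : 0 <= (1 / 2 : R) <= 1 by apply/andP; split; lra.
have {}h := h hh.
lra.
Qed.

Lemma char_poly_conjJ n (J N : 'M[R]_n) : J *m J = 1%:M ->
  char_poly (J *m N *m J) = char_poly N.
Proof.
move=> JJ.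
rewrite /char_poly /char_poly_mx.
set Jp := map_mx (@polyC R) J.
have JpJp : Jp *m Jp = 1%:M by rewrite /Jp -map_mxM JJ map_mx1.
have -> : ('X%:M - map_mx (@polyC R) (J *m N *m J)) =
   Jp *m ('X%:M - map_mx (@polyC R) N) *m Jp.
  rewrite !map_mxM -/Jp mulmxBr mulmxBl; congr (_ - _).
  by rewrite scalar_mxC -mulmxA JpJp mulmx1.
by rewrite !det_mulmx mulrC mulrA -det_mulmx JpJp det1 mul1r.
Qed.

Lemma qf_par n (M1 : 'M[R]_n) a b :
  qf M1 (a + b) + qf M1 (a - b) = 2%:R * qf M1 a + 2%:R * qf M1 b.
Proof. rewrite /qf !bfDl !bfDr !bfNl !bfNr; ring. Qed.

Definition PP s1 s2 : 'M[R]_(s1 + s2) := block_mx 1%:M 0 0 0.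
Definition QQ s1 s2 : 'M[R]_(s1 + s2) := block_mx 0 0 0 1%:M.
Definition JJ s1 s2 : 'M[R]_(s1 + s2) := block_mx 1%:M 0 0 (- 1%:M).

Lemma PQ1 s1 s2 : PP s1 s2 + QQ s1 s2 = 1%:M.
Proof. by rewrite /PP /QQ add_block_mx !addr0 add0r -scalar_mx_block. Qed.
Lemma JPQ s1 s2 : JJ s1 s2 = PP s1 s2 - QQ s1 s2.
Proof. by rewrite /JJ /PP /QQ opp_block_mx add_block_mx !oppr0 !addr0 add0r. Qed.
Lemma JJtr s1 s2 : (JJ s1 s2)^T = JJ s1 s2.
Proof. by rewrite /JJ tr_block_mx !trmx0 trmx1 linearN /= trmx1. Qed.
Lemma JJJ s1 s2 : JJ s1 s2 *m JJ s1 s2 = 1%:M.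
Proof.
rewrite /JJ mulmx_block !mulmx0 !mul0mx !mulmx1 !addr0 !add0r mulmxN mulmx1 opprK.
by rewrite -scalar_mx_block.
Qed.

Section Key.
Variables (s1 s2 m : nat) (A : 'M[R]_(m, s1 + s2)) (Mx Mp : 'M[R]_m)
  (u1 u2 : 'cV[R]_m -> 'cV[R]_m).
Hypotheses (sMx : Mx^T = Mx) (psdMx : forall x, 0 <= qf Mx x)
  (sMp : Mp^T = Mp) (psdMp : forall x, 0 <= qf Mp x)
  (Ainj : forall y : 'cV[R]_(s1 + s2), A *m y = 0 -> y = 0)
  (feasx : feasible A Mx)
  (splitq : forall z, qf Mp z = qf Mx (u1 z) + qf Mx (u2 z))
  (Au1 : forall z, A^T *m u1 z = PP s1 s2 *m (A^T *m z))
  (Au2 : forall z, A^T *m u2 z = QQ s1 s2 *m (A^T *m z)).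

Lemma key_feas : feasible A Mp.
Proof.
rewrite /feasible submxE sMp.
set Kc := cokermx Mp.
have MK : Mp *m Kc = 0 by exact: mulmx_coker.
apply/eqP/matrixP => i j.
have zj : A^T *m col j Kc = 0.
  have Mz : Mp *m col j Kc = 0 by rewrite colE mulmxA MK mul0mx.
  have q0 : qf Mp (col j Kc) = 0 by rewrite /qf /bf -mulmxA Mz mulmx0 mxE.
  have := splitq (col j Kc); rewrite q0 => e.
  have h1 := psdMx (u1 (col j Kc)); have h2 := psdMx (u2 (col j Kc)).
  have e1 : qf Mx (u1 (col j Kc)) = 0 by lra.
  have e2 : qf Mx (u2 (col j Kc)) = 0 by lra.
  have a1 := feas_ker sMx feasx (qf_psd0 sMx psdMx e1).
  have a2 := feas_ker sMx feasx (qf_psd0 sMx psdMx e2).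
  rewrite Au1 in a1; rewrite Au2 in a2.
  by rewrite -[A^T *m col j Kc]mul1mx -(PQ1 s1 s2) mulmxDl a1 a2 addr0.
have : col j (A^T *m Kc) = 0 by rewrite colE -mulmxA -colE zj.
move=> /matrixP /(_ i 0).
by rewrite [LHS]mxE => ->; rewrite !mxE.
Qed.

Lemma key_Phi (Phi : 'M[R]_(s1 + s2) -> R) :
  information_function Phi -> eigenvalue_based Phi ->
  Phi (infmat A Mx) <= Phi (infmat A Mp).
Proof.
move=> iP eP.
have MGMx : Mx *m pinvmx Mx *m Mx = Mx := mulmxKpV (submx_refl Mx).
have MGMp : Mp *m pinvmx Mp *m Mp = Mp := mulmxKpV (submx_refl Mp).
have feasp := key_feas.
have nNx : nnd (infmat A Mx) := @infmat_nnd _ _ A Mx sMx psdMx Ainj feasx _ MGMx.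
have nNp : nnd (infmat A Mp) := @infmat_nnd _ _ A Mp sMp psdMp Ainj feasp _ MGMp.
set Nx := infmat A Mx in nNx *.
set Np := infmat A Mp in nNp *.
set J := JJ s1 s2.
set Nj := J *m Nx *m J.
have qJ x : qf Nj x = qf Nx (J *m x).
  rewrite /qf /bf /Nj.
  have -> : (J *m x)^T = x^T *m J by rewrite trmx_mul JJtr.
  by rewrite !mulmxA.
have nNj : nnd Nj.
  split; first by rewrite /Nj !trmx_mul JJtr nNx.1 mulmxA.
  by move=> x; have := qJ x; rewrite /qf /bf => ->; apply: nndP.
have ePj : Phi Nj = Phi Nx by apply: eP => //; apply: char_poly_conjJ; apply: JJJ.
set D := (1 - 1/2) *: Nx + (1/2) *: Nj.
have hh : 0 <= (1 / 2 : R) <= 1 by apply/andP; split; lra.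
have h1 : Phi Nx <= Phi D.
  have [_ conc _ _ _] := iP.
  have := conc (1/2) Nx Nj hh nNx nNj.
  rewrite ePj -/D => h; lra.
have nD : nnd D by apply: nndD; apply: nndZ => //; lra.
have nE : nnd (Np - D).
  split; first by rewrite linearB /= nNp.1 nD.1.
  move=> x.
  have -> : (x^T *m (Np - D) *m x) 0 0 = qf Np x - qf D x.
    by rewrite -/(bf _ x x) bfMD bfMN.
  rewrite subr_ge0.
  have eD : qf D x = (1 - 1/2) * qf Nx x + 1/2 * qf Nx (J *m x).
    by rewrite -qJ /qf bfMD !bfMZ.
  have ex : x = PP s1 s2 *m x + QQ s1 s2 *m x by rewrite -mulmxDl PQ1 mul1mx.
  have eJ : J *m x = PP s1 s2 *m x - QQ s1 s2 *m x by rewrite /J JPQ mulmxBl.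
  have par := qf_par Nx (PP s1 s2 *m x) (QQ s1 s2 *m x).
  rewrite -ex -eJ in par.
  have [z [Az ez]] := @infmat_attained _ _ A Mp sMp psdMp Ainj feasp _ MGMp x.
  rewrite -/Np in ez.
  have l1 := @infmat_le _ _ A Mx sMx psdMx Ainj feasx _ MGMx _ (u1 z) (Au1 z).
  have l2 := @infmat_le _ _ A Mx sMx psdMx Ainj feasx _ MGMx _ (u2 z) (Au2 z).
  rewrite -/Nx Az in l1 l2.
  rewrite eD ez splitq; lra.
have -> : Np = D + (Np - D) by rewrite addrC subrK.
apply: le_trans h1 _; exact: Phi_mono.
Qed.

End Key.

Lemma sumsq_expand (I : finType) (al h : I -> R) X :
  \sum_k al k * (X + h k) ^+ 2 =
  X ^+ 2 * (\sum_k al k) + 2%:R * X * (\sum_k al k * h k) + \sum_k al k * h k ^+ 2.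
Proof.
rewrite mulr_sumr mulr_sumr -!big_split /=; apply: eq_bigr => k _; ring.
Qed.

Lemma ident v1 d (xi : 'I_v1 -> 'I_d -> R) (lam : 'I_v1 -> R) (a : 'I_v1 -> R)
  (b : R) (h : 'I_d -> R) :
  let w i := \sum_k xi i k in
  let c := \sum_i lam i * w i in
  let alpha k := (\sum_i lam i * xi i k) / c in
  let mm := \sum_k alpha k * h k in
  c != 0 ->
  \sum_i \sum_k (w i * alpha k * lam i) * (a i + b + h k) ^+ 2 =
  \sum_i \sum_k (xi i k * lam i) * (a i + (b + mm)) ^+ 2 +
  \sum_i \sum_k (xi i k * lam i) * (- mm + h k) ^+ 2.
Proof.
move=> w c alpha mm c0.
have S0 : \sum_k alpha k = 1.
  rewrite /alpha -mulr_suml exchange_big /=.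
  rewrite (eq_bigr (fun i => lam i * w i)) ?divff // => i _.
  by rewrite /w mulr_sumr.
have L : \sum_i \sum_k (w i * alpha k * lam i) * (a i + b + h k) ^+ 2 =
   \sum_i (w i * lam i) * ((a i + b) ^+ 2 + 2%:R * (a i + b) * mm
       + \sum_k alpha k * h k ^+ 2).
  apply: eq_bigr => i _.
  have E := sumsq_expand alpha h (a i + b); rewrite S0 mulr1 -/mm in E.
  rewrite -E mulr_sumr.
  by apply: eq_bigr => k _; ring.
have R1 : \sum_i \sum_k (xi i k * lam i) * (a i + (b + mm)) ^+ 2 =
   \sum_i (w i * lam i) * (a i + b + mm) ^+ 2.
  apply: eq_bigr => i _; rewrite /w mulr_suml mulr_suml; apply: eq_bigr => k _; ring.
have R2 : \sum_i \sum_k (xi i k * lam i) * (- mm + h k) ^+ 2 =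
   c * \sum_k alpha k * (- mm + h k) ^+ 2.
  rewrite exchange_big /= mulr_sumr; apply: eq_bigr => k _.
  rewrite -mulr_suml /alpha; set X := \sum_i lam i * xi i k.
  have -> : c * (X / c * (- mm + h k) ^+ 2) = X * (- mm + h k) ^+ 2 by field.
  by congr (_ * _); apply: eq_bigr => i _; rewrite mulrC.
rewrite L R1 R2 sumsq_expand S0.
rewrite /c mulr_suml -big_split /=; apply: eq_bigr => i _.
rewrite /mm; ring.
Qed.

Section Model.
Variables (v1 v2 d s1 s2 : nat) (g : 'I_d -> 'cV[R]_v2).

Lemma fz_col (a : 'cV[R]_v1) (b : 'cV[R]_1) (c : 'cV[R]_v2) i k :
  ((fvec g i k)^T *m col_mx a (col_mx b c)) 0 0 = a i 0 + b 0 0 + ((g k)^T *m c) 0 0.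
Proof.
rewrite /fvec !tr_col_mx !mul_row_col trmx_delta -rowE trmx1 mul1mx.
by rewrite [LHS]mxE [X in _ + X]mxE addrA [X in X + _ + _]mxE.
Qed.

Lemma qf_moment lam (xi : 'I_v1 -> 'I_d -> R) z :
  qf (moment lam g xi) z =
  \sum_i \sum_k (xi i k * lam i) * ((fvec g i k)^T *m z) 0 0 ^+ 2.
Proof.
rewrite /qf /bf /moment mulmx_sumr mulmx_suml summxE; apply: eq_bigr => i _.
rewrite mulmx_sumr mulmx_suml summxE; apply: eq_bigr => k _.
rewrite -scalemxAr -scalemxAl mxE; congr (_ * _).
set f := fvec g i k.
have -> : z^T *m (f *m f^T) *m z = (z^T *m f) *m (f^T *m z) by rewrite !mulmxA.
have -> : z^T *m f = (f^T *m z)^T by rewrite trmx_mul trmxK.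
by rewrite mxE big_ord1 mxE expr2.
Qed.

Lemma moment_sym lam (xi : 'I_v1 -> 'I_d -> R) : (moment lam g xi)^T = moment lam g xi.
Proof.
rewrite /moment raddf_sum; apply: eq_bigr => i _.
rewrite raddf_sum; apply: eq_bigr => k _.
by rewrite [LHS]/= linearZ /= trmx_mul trmxK.
Qed.

Lemma moment_psd lam (xi : 'I_v1 -> 'I_d -> R) :
  (forall i k, 0 <= xi i k * lam i) -> forall z, 0 <= qf (moment lam g xi) z.
Proof.
move=> h z; rewrite qf_moment; apply: sumr_ge0 => i _; apply: sumr_ge0 => k _.
by apply: mulr_ge0 => //; apply: sqr_ge0.
Qed.

Lemma colinj p q (Q : 'M[R]_(p, q)) (y : 'cV[R]_q) : \rank Q = q -> Q *m y = 0 -> y = 0.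
Proof.
move=> rQ Qy.
have rf : row_free Q^T by rewrite /row_free mxrank_tr rQ.
have : y^T *m Q^T = 0 *m Q^T by rewrite -trmx_mul Qy trmx0 mul0mx.
by move/(row_free_inj rf) => /(congr1 trmx); rewrite trmxK trmx0.
Qed.

Lemma Ainj (Q1 : 'M[R]_(v1, s1)) (K : 'M[R]_(v2, s2)) :
  \rank Q1 = s1 -> \rank K = s2 ->
  forall y : 'cV[R]_(s1 + s2), Amat Q1 K *m y = 0 -> y = 0.
Proof.
move=> r1 r2 y; rewrite -[y]vsubmxK /Amat mul_block_col mul_col_mx !mul0mx !addr0 add0r.
rewrite -[0 : 'M_(v1 + (1 + v2), 1)]col_mx0 -[0 : 'M_(1 + v2, 1)]col_mx0.
move=> /eq_col_mx [e1 /eq_col_mx [_ e2]].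
by rewrite (colinj r1 e1) (colinj r2 e2) col_mx0.
Qed.

Lemma AT_col (Q1 : 'M[R]_(v1, s1)) (K : 'M[R]_(v2, s2)) a (b : 'cV[R]_1) c :
  (Amat Q1 K)^T *m col_mx a (col_mx b c) = col_mx (Q1^T *m a) (K^T *m c).
Proof.
rewrite /Amat tr_block_mx tr_col_mx !trmx0 mul_block_col mul_row_col !mul0mx.
by rewrite !addr0 !add0r.
Qed.

Lemma PP_col (y1 : 'cV[R]_s1) (y2 : 'cV[R]_s2) : PP s1 s2 *m col_mx y1 y2 = col_mx y1 0.
Proof. by rewrite /PP mul_block_col !mul1mx !mul0mx !addr0. Qed.
Lemma QQ_col (y1 : 'cV[R]_s1) (y2 : 'cV[R]_s2) : QQ s1 s2 *m col_mx y1 y2 = col_mx 0 y2.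
Proof. by rewrite /QQ mul_block_col !mul1mx !mul0mx !add0r. Qed.

Lemma qf_moment_col lam (xi : 'I_v1 -> 'I_d -> R) a b c :
  qf (moment lam g xi) (col_mx a (col_mx b c)) =
  \sum_i \sum_k (xi i k * lam i) * (a i 0 + b 0 0 + ((g k)^T *m c) 0 0) ^+ 2.
Proof.
rewrite qf_moment; apply: eq_bigr => i _; apply: eq_bigr => k _; by rewrite fz_col.
Qed.

End Model.

End Aux.

Unset Implicit Arguments.
Set Strict Implicit.

Theorem theorem1 (R : realType) (v1 v2 d s1 s2 : nat)
  (lam : 'I_v1 -> R) (g : 'I_d -> 'cV[R]_v2)
  (Q1 : 'M[R]_(v1, s1)) (K : 'M[R]_(v2, s2))
  (Phi : 'M[R]_(s1 + s2) -> R) :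
  (forall i, 0 < lam i) ->
  \rank Q1 = s1 ->
  Q1^T *m (const_mx 1 : 'cV[R]_v1) = 0 ->
  (forall i, row i Q1 != 0) ->
  \rank K = s2 ->
  information_function Phi ->
  eigenvalue_based Phi ->
  (exists xi, Phi_optimal Phi lam g Q1 K xi) ->
  exists (w : 'I_v1 -> R) (alpha : 'I_d -> R),
    [/\ prob_vec w, prob_vec alpha &
        Phi_optimal Phi lam g Q1 K (fun i k => w i * alpha k)].
Proof.
move=> lam0 r1 hQ1 _ r2 iP eP [xi [[xi0 xi1] fxi optxi]].
pose w i := \sum_k xi i k.
pose c := \sum_i lam i * w i.
pose alpha k := (\sum_i lam i * xi i k) / c.
have w0 i : 0 <= w i by apply: sumr_ge0.
have w1 : \sum_i w i = 1 by [].
have cpos : 0 < c.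
  rewrite lt_def sumr_ge0 ?andbT; last by move=> i _; apply: mulr_ge0 => //; apply: ltW.
  apply/negP => /eqP /psumr_eq0P H.
  have {}H : forall i, lam i * w i = 0.
    by move=> i; apply: H => // j _; apply: mulr_ge0 => //; apply: ltW.
  have : \sum_i w i = 0.
    apply: big1 => i _; have := H i.
    by move=> /eqP; rewrite mulf_eq0 (gt_eqF (lam0 i)) /= => /eqP.
  by rewrite w1 => /eqP; rewrite oner_eq0.
pose mmf (cc : 'cV[R]_v2) := \sum_k alpha k * ((g k)^T *m cc) 0 0.
pose u1 (z : 'cV[R]_(v1 + (1 + v2))) := col_mx (usubmx z)
   (col_mx (usubmx (dsubmx z) + (mmf (dsubmx (dsubmx z)))%:M) (0 : 'cV[R]_v2)).
pose u2 (z : 'cV[R]_(v1 + (1 + v2))) :=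
   col_mx (- mmf (dsubmx (dsubmx z)) *: (const_mx 1 : 'cV[R]_v1))
          (col_mx (0 : 'cV[R]_1) (dsubmx (dsubmx z))).
pose pi i k := w i * alpha k.
have alpha0 k : 0 <= alpha k.
  by apply: divr_ge0; [apply: sumr_ge0 => i _; apply: mulr_ge0 => //; apply: ltW|apply: ltW].
have alpha1 : \sum_k alpha k = 1.
  rewrite /alpha -mulr_suml exchange_big /=.
  rewrite (eq_bigr (fun i => lam i * w i)) ?divff ?lt0r_neq0 // => i _.
  by rewrite /w mulr_sumr.
have psx i k : 0 <= xi i k * lam i by apply: mulr_ge0 => //; apply: ltW.
have psp i k : 0 <= pi i k * lam i by apply: mulr_ge0; [apply: mulr_ge0|apply: ltW].
have splitq z : qf (moment lam g pi) z =
    qf (moment lam g xi) (u1 z) + qf (moment lam g xi) (u2 z).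
  set a := usubmx z; set b := usubmx (dsubmx z); set cc := dsubmx (dsubmx z).
  have ez : z = col_mx a (col_mx b cc) by rewrite /a /b /cc !vsubmxK.
  rewrite /u1 /u2 -/a -/b -/cc {1}ez !qf_moment_col.
  have := @ident _ _ _ xi lam (fun i => a i 0) (b 0 0) (fun k => ((g k)^T *m cc) 0 0) (lt0r_neq0 cpos).
  move=> E; apply: (etrans E); congr (_ + _).
    apply: eq_bigr => i _; apply: eq_bigr => k _; congr (_ * _ ^+ 2).
    have e1 : (b + (mmf cc)%:M) 0 0 = b 0 0 + mmf cc by rewrite !mxE eqxx mulr1n.
    have e2 : ((g k)^T *m (0 : 'cV[R]_v2)) 0 0 = 0 by rewrite mulmx0 mxE.
    by rewrite e1 e2 addr0.
  apply: eq_bigr => i _; apply: eq_bigr => k _; congr (_ * _ ^+ 2).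
  have e3 : (- mmf cc *: (const_mx 1 : 'cV[R]_v1)) i 0 = - mmf cc by rewrite !mxE mulr1.
  have e4 : (0 : 'cV[R]_1) 0 0 = 0 by rewrite mxE.
  by rewrite e3 e4 addr0.
have ezf (z : 'cV[R]_(v1 + (1 + v2))) :
    z = col_mx (usubmx z) (col_mx (usubmx (dsubmx z)) (dsubmx (dsubmx z))).
  by rewrite !vsubmxK.
have Au1 z : (Amat Q1 K)^T *m u1 z = PP _ s1 s2 *m ((Amat Q1 K)^T *m z).
  by rewrite [X in _ = _ *m (_ *m X)]ezf /u1 !AT_col PP_col mulmx0.
have Au2 z : (Amat Q1 K)^T *m u2 z = QQ _ s1 s2 *m ((Amat Q1 K)^T *m z).
  by rewrite [X in _ = _ *m (_ *m X)]ezf /u2 !AT_col QQ_col -scalemxAr hQ1 scaler0.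
have sMx := moment_sym g lam xi.
have sMp := moment_sym g lam pi.
have psdMx := moment_psd g psx.
have psdMp := moment_psd g psp.
have AI := Ainj r1 r2.
have feasp := key_feas sMx psdMx sMp fxi splitq Au1 Au2.
exists w, alpha; split => //.
split => //.
  split; first by move=> i k; apply: mulr_ge0.
  rewrite -w1; apply: eq_bigr => i _.
  by rewrite -mulr_sumr alpha1 mulr1.
move=> eta deta feta.
apply: le_trans (optxi eta deta feta) _.
exact: (key_Phi sMx psdMx sMp psdMp AI fxi splitq Au1 Au2 iP eP).
Qed.
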